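(* Let $\mathcal E=\{\lambda_x,\rho_x\}_{x=1}^n$ be an ensemble of states on a finite-dimensional system $A$, let $M=(M_1,\dots,M_{d_S})$ be a measurement on $A$, and let $R$ be a system with $d_R=n$. Then $$P^Q_{\rm succ}(\mathcal E,M)=\|(\Phi_M\otimes\mathrm{id}_R)(\rho_{\mathcal E})\|^\diamond_{R|S}=P_{\rm succ}(\Phi_M(\mathcal E)).$$
   Context: $S$ is a system of dimension $d_S$ with basis $\{|j\rangle\}$; $\Phi_M\in\mathcal C(A,S)$ is the quantum-to-classical channel $\Phi_M(\sigma)=\sum_j{\rm Tr}[\sigma M_j]|j\rangle\langle j|$. $\rho_{\mathcal E}=\sum_x\lambda_x\rho_x\otimes|x\rangle\langle x|\in\mathfrak S(AR)$. $\Phi_M(\mathcal E)=\{\lambda_x,\Phi_M(\rho_x)\}$. $P^Q_{\rm succ}(\mathcal E,M)=\sup\sum_{x,j}\lambda_xp(x|j){\rm Tr}[\rho_xM_j]$ over conditional probabilities $p(x|j)$; $P_{\rm succ}(\mathcal E')=\max_N\sum_x\lambda_x{\rm Tr}[\rho'_xN_x]$ over $n$-outcome measurements $N$. For $X\in\mathcal B_h(SR)$ and $\phi\in\mathcal L(S,R)$, $\langle X,\phi\rangle={\rm Tr}[XC_{\phi^*}]$ where $C_\psi=(\psi\otimes\mathrm{id})(|I\rangle\rangle\langle\langle I|)$ is the Choi matrix and $\phi^*$ the adjoint; $\|X\|^\diamond_{R|S}=\max_{\alpha\in\mathcal C(S,R)}\langle X,\alpha\rangle$ for $X\ge0$. 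*)

(* Defs.v *)
From HB Require Import structures.
From mathcomp Require Import all_boot all_order all_algebra.
From mathcomp Require Import classical_sets reals.
From mathcomp.real_closed Require Import complex mxtens.

Set Implicit Arguments.
Unset Strict Implicit.
Unset Printing Implicit Defensive.
Import Order.TTheory GRing.Theory Num.Theory.
Local Open Scope ring_scope.
Local Open Scope classical_set_scope.

Section Q.
Variable R : realType.
Local Notation C := (R[i]).

Definition adjmx m n (A : 'M[C]_(m, n)) : 'M[C]_(n, m) :=
  (map_mx (@conjc R) A)^T.

Definition psd d (A : 'M[C]_d) : Prop :=
  forall v : 'cV[C]_d, 0 <= (adjmx v *m A *m v) 0 0.

Definition is_state d (rho : 'M[C]_d) : Prop := psd rho /\ \tr rho = 1.

Definition is_ensemble d n (lam : 'I_n -> R) (rho : 'I_n -> 'M[C]_d) : Prop :=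
  (forall x, 0 <= lam x) /\ \sum_(x < n) lam x = 1 /\ (forall x, is_state (rho x)).

Definition is_measurement d k (M : 'I_k -> 'M[C]_d) : Prop :=
  (forall j, psd (M j)) /\ \sum_(j < k) M j = 1%:M.

Definition ket_bra d (i j : 'I_d) : 'M[C]_d := delta_mx i j.

Definition qc_channel dA dS (M : 'I_dS -> 'M[C]_dA) (sigma : 'M[C]_dA) : 'M[C]_dS :=
  \sum_(j < dS) (\tr (sigma *m M j)) *: ket_bra j j.

(** (phi (x) id_k)(X), bipartite index (a, x) encoded by mxtens_index *)
Definition tens_id d1 d2 k (phi : 'M[C]_d1 -> 'M[C]_d2) (X : 'M[C]_(d1 * k))
  : 'M[C]_(d2 * k) :=
  \sum_(a < k) \sum_(b < k)
    phi (\matrix_(i, j) X (mxtens_index (i, a)) (mxtens_index (j, b)))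
      *t ket_bra a b.

Definition is_linear_map d1 d2 (phi : 'M[C]_d1 -> 'M[C]_d2) : Prop :=
  forall (c : C) (u v : 'M[C]_d1), phi (c *: u + v) = c *: phi u + phi v.

Definition completely_positive d1 d2 (phi : 'M[C]_d1 -> 'M[C]_d2) : Prop :=
  forall (k : nat) (X : 'M[C]_(d1 * k)), psd X -> psd (tens_id phi X).

Definition trace_preserving d1 d2 (phi : 'M[C]_d1 -> 'M[C]_d2) : Prop :=
  forall X : 'M[C]_d1, \tr (phi X) = \tr X.

Definition is_channel d1 d2 (phi : 'M[C]_d1 -> 'M[C]_d2) : Prop :=
  [/\ is_linear_map phi, completely_positive phi & trace_preserving phi].

Definition hs_adjoint d1 d2 (phi : 'M[C]_d1 -> 'M[C]_d2) (B : 'M[C]_d2)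
  : 'M[C]_d1 :=
  \matrix_(i, j) \tr (adjmx (phi (ket_bra i j)) *m B).

Definition max_ent_op d : 'M[C]_(d * d) :=
  \sum_(a < d) \sum_(b < d) ket_bra a b *t ket_bra a b.

Definition choi d1 d2 (psi : 'M[C]_d1 -> 'M[C]_d2) : 'M[C]_(d2 * d1) :=
  tens_id psi (max_ent_op d1).

Definition pairing dS dR (X : 'M[C]_(dS * dR)) (phi : 'M[C]_dS -> 'M[C]_dR) : C :=
  \tr (X *m choi (hs_adjoint phi)).

Definition diamond_norm dS dR (X : 'M[C]_(dS * dR)) : R :=
  sup [set complex.Re (pairing X alpha) | alpha in [set a | is_channel a]].

Definition cq_state d n (lam : 'I_n -> R) (rho : 'I_n -> 'M[C]_d) : 'M[C]_(d * n) :=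
  \sum_(x < n) (lam x)%:C%C *: (rho x *t ket_bra x x).

Definition is_cond_prob n k (p : 'I_n -> 'I_k -> R) : Prop :=
  (forall x j, 0 <= p x j) /\ (forall j, \sum_(x < n) p x j = 1).

Definition PQ_succ dA n dS (lam : 'I_n -> R) (rho : 'I_n -> 'M[C]_dA)
  (M : 'I_dS -> 'M[C]_dA) : R :=
  sup [set complex.Re (\sum_(x < n) \sum_(j < dS)
          ((lam x * p x j)%:C%C * \tr (rho x *m M j)))
       | p in [set q | is_cond_prob q]].

Definition P_succ d n (lam : 'I_n -> R) (rho : 'I_n -> 'M[C]_d) : R :=
  sup [set complex.Re (\sum_(x < n) (lam x)%:C%C * \tr (rho x *m N x))
       | N in [set N' | @is_measurement d n N']].

End Q.

(* Main.v *)
Require Import Defs.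
From mathcomp Require Import all_boot all_order all_algebra.
From mathcomp Require Import classical_sets reals.
From mathcomp.real_closed Require Import complex mxtens.
Set Implicit Arguments. Unset Strict Implicit. Unset Printing Implicit Defensive.
Import Order.TTheory GRing.Theory Num.Theory.
Local Open Scope ring_scope.

Section H.
Variable R : realType.
Local Notation C := (R[i]).

Lemma ReD (x y : C) : complex.Re (x + y) = complex.Re x + complex.Re y.
Proof. by case: x; case: y. Qed.
Lemma Re0 : complex.Re (0 : C) = 0. Proof. by []. Qed.
Lemma Re_sum I (r : seq I) P (F : I -> C) :
  complex.Re (\sum_(i <- r | P i) F i) = \sum_(i <- r | P i) complex.Re (F i).
Proof. exact: (big_morph _ ReD Re0). Qed.
Lemma ReMr (a : R) (z : C) : complex.Re (a%:C%C * z) = a * complex.Re z.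
Proof. case: z => x y /=. by rewrite mul0r subr0. Qed.
Lemma ReMrr (a : R) (z : C) : complex.Re (z * a%:C%C) = complex.Re z * a.
Proof. by rewrite mulrC ReMr mulrC. Qed.
Lemma Re_real (a : R) : complex.Re (a%:C%C) = a. Proof. by []. Qed.

Lemma sum_tens m k (F : 'I_(m * k) -> C) :
  \sum_I F I = \sum_(i < m) \sum_(c < k) F (mxtens_index (i, c)).
Proof.
rewrite pair_bigA /= (reindex (@mxtens_index m k)) /=.
  by apply: eq_bigr => -[i c].
by exists (@mxtens_unindex m k) => x _; [exact: mxtens_indexK | exact: mxtens_unindexK].
Qed.

Definition blk d k (X : 'M[C]_(d * k)) (a b : 'I_k) : 'M[C]_d :=
  \matrix_(i, j) X (mxtens_index (i, a)) (mxtens_index (j, b)).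

Lemma tens_idE d1 d2 k (phi : 'M[C]_d1 -> 'M[C]_d2) (X : 'M[C]_(d1 * k)) i a j b :
  tens_id phi X (mxtens_index (i, a)) (mxtens_index (j, b)) = phi (blk X a b) i j.
Proof.
rewrite /tens_id summxE (bigD1 a) //= summxE (bigD1 b) //= tensmxE /ket_bra mxE !eqxx mulr1.
rewrite big1 ?addr0; last first.
  by move=> b' /negPf nb; rewrite tensmxE mxE eqxx [b == b']eq_sym nb mulr0.
rewrite big1 ?addr0 //.
move=> a' /negPf na; rewrite summxE big1 // => b' _.
by rewrite tensmxE mxE [a == a']eq_sym na mulr0.
Qed.

Lemma qformE d (A : 'M[C]_d) (v : 'cV[C]_d) :
  (adjmx v *m A *m v) 0 0 = \sum_i \sum_j ((v i 0)^*%C * A i j * v j 0).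
Proof.
rewrite mxE exchange_big /=; apply: eq_bigr => j _.
rewrite mxE mulr_suml; apply: eq_bigr => i _.
by rewrite /adjmx !mxE.
Qed.

Lemma psd_entry d (A : 'M[C]_d) i : psd A -> 0 <= A i i.
Proof.
move=> /(_ (delta_mx i 0)); rewrite qformE (bigD1 i) //= [X in _ + X]big1 ?addr0; last first.
  by move=> j /negPf nj; rewrite big1 // => k _; rewrite !mxE nj andFb conjc_nat mulr0n !mul0r.
rewrite (bigD1 i) //= big1 ?addr0; last by move=> j /negPf nj; rewrite !mxE nj mulr0.
by rewrite !mxE !eqxx conjc_nat mul1r mulr1.
Qed.

Lemma psd_diag d (D : 'I_d -> C) : (forall i, 0 <= D i) ->
  psd (\matrix_(i, j) ((i == j)%:R * D i)).
Proof.
move=> hD v; rewrite qformE; apply: sumr_ge0 => i _.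
rewrite (bigD1 i) //= big1 ?addr0; last first.
  by move=> j /negPf nj; rewrite mxE eq_sym nj mul0r mulr0 mul0r.
rewrite mxE eqxx mul1r mulrC mulrA; apply: mulr_ge0 => //; exact: mulcJ_ge0.
Qed.


Lemma ge0_real (z : C) : 0 <= z -> z = (complex.Re z)%:C%C /\ 0 <= complex.Re z.
Proof. by case: z => a b; rewrite lecE /= => /andP[/eqP -> h]. Qed.

Lemma sup_eq_max (E : set R) (w : R) : E w -> (forall y, E y -> y <= w) -> sup E = w.
Proof.
move=> Ew ub; apply: le_anti; rewrite ge_sup //=; last by exists w.
by apply: ub_le_sup => //; exists w.
Qed.

Lemma argmax_ex n k (x0 : 'I_n) (c : 'I_n -> 'I_k -> R) :
  exists g : 'I_k -> 'I_n, forall x j, c x j <= c (g j) j.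
Proof.
exists (fun j => [arg max_(x > x0) c x j]%O) => x j.
by case: arg_maxP => // i _ /(_ x isT).
Qed.

Lemma bound_lemma n k (c w : 'I_n -> 'I_k -> R) (g : 'I_k -> 'I_n) :
  (forall x j, c x j <= c (g j) j) -> (forall x j, 0 <= w x j) ->
  (forall j, \sum_x w x j = 1) ->
  \sum_x \sum_j w x j * c x j <= \sum_j c (g j) j.
Proof.
move=> hc hw h1; rewrite exchange_big /=; apply: ler_sum => j _.
rewrite -[c (g j) j]mul1r -(h1 j) mulr_suml; apply: ler_sum => x _.
by apply: ler_wpM2l.
Qed.

Lemma attain_lemma n k (c : 'I_n -> 'I_k -> R) (g : 'I_k -> 'I_n) :
  \sum_x \sum_j (x == g j)%:R * c x j = \sum_j c (g j) j.
Proof.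
rewrite exchange_big /=; apply: eq_bigr => j _.
rewrite (bigD1 (g j)) //= eqxx mul1r big1 ?addr0 // => x /negPf ->.
by rewrite mul0r.
Qed.

Lemma sum_indic (T : pzSemiRingType) n k (g : 'I_k -> 'I_n) j : \sum_x ((x == g j)%:R : T) = 1.
Proof. by rewrite (bigD1 (g j)) //= eqxx big1 ?addr0 // => x /negPf ->. Qed.

Definition dmx d (D : 'I_d -> C) : 'M[C]_d := \matrix_(i, j) ((i == j)%:R * D i).

Lemma tr_dmx_mul d (D : 'I_d -> C) (N : 'M[C]_d) :
  \tr (dmx D *m N) = \sum_i D i * N i i.
Proof.
rewrite /mxtrace; apply: eq_bigr => i _; rewrite mxE (bigD1 i) //= big1 ?addr0.
  by rewrite mxE eqxx mul1r.
by move=> k /negPf nk; rewrite mxE eq_sym nk mul0r mul0r.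
Qed.

Lemma tr_mul_delta d (A : 'M[C]_d) a : \tr (A *m delta_mx a a) = A a a.
Proof.
rewrite /mxtrace (bigD1 a) //= big1 ?addr0.
  rewrite mxE (bigD1 a) //= big1 ?addr0; first by rewrite mxE !eqxx mulr1.
  by move=> k /negPf nk; rewrite mxE nk mulr0.
move=> i /negPf ni; rewrite mxE big1 // => k _.
by rewrite mxE ni andbF mulr0.
Qed.

Lemma tr_delta d (a : 'I_d) : \tr (delta_mx a a : 'M[C]_d) = 1.
Proof.
rewrite /mxtrace (bigD1 a) //= big1 ?addr0; first by rewrite mxE !eqxx.
by move=> i /negPf ni; rewrite mxE ni.
Qed.

Lemma qc_diag dA dS (M : 'I_dS -> 'M[C]_dA) s :
  qc_channel M s = dmx (fun j => \tr (s *m M j)).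
Proof.
apply/matrixP => i k; rewrite /qc_channel summxE (bigD1 i) //= big1 ?addr0.
  by rewrite !mxE eqxx andTb mulrC eq_sym.
by move=> j /negPf nj; rewrite /ket_bra !mxE eq_sym nj mulr0.
Qed.


Lemma blk_cq d n (lam : 'I_n -> R) (rho : 'I_n -> 'M[C]_d) (a b : 'I_n) :
  blk (cq_state lam rho) a b = ((a == b)%:R * (lam a)%:C%C) *: rho a.
Proof.
apply/matrixP => i i'; rewrite !mxE /cq_state summxE (bigD1 a) //= big1 ?addr0.
  rewrite !mxE !mxtens_indexK /= eqxx /= [b == a]eq_sym.
  by case: (a == b); rewrite ?mul1r ?mul0r ?mulr1 ?mulr0.
by move=> x /negPf nx; rewrite !mxE !mxtens_indexK /= eq_sym nx mulr0 mulr0.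
Qed.

Lemma X_entry dA n dS (lam : 'I_n -> R) (rho : 'I_n -> 'M[C]_dA) (M : 'I_dS -> 'M[C]_dA) j a j' b :
  tens_id (qc_channel M) (cq_state lam rho) (mxtens_index (j, a)) (mxtens_index (j', b))
  = (j == j')%:R * ((a == b)%:R * (lam a)%:C%C * \tr (rho a *m M j)).
Proof. by rewrite tens_idE qc_diag mxE blk_cq -scalemxAl mxtraceZ. Qed.

Lemma blk_maxent n (a : 'I_n) : blk (max_ent_op R n) a a = delta_mx a a.
Proof.
apply/matrixP => i i'; rewrite !mxE /max_ent_op summxE (bigD1 a) //= summxE.
rewrite (bigD1 a) //= big1 ?addr0; last first.
  by move=> b /negPf nb; rewrite tensmxE /ket_bra !mxE eqxx [a == b]eq_sym nb /= mulr0.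
rewrite big1 ?addr0; last first.
  move=> b /negPf nb; rewrite summxE big1 // => b' _.
  by rewrite tensmxE /ket_bra !mxE [a == b]eq_sym nb /= mulr0.
by rewrite tensmxE /ket_bra !mxE !eqxx /= mulr1.
Qed.

Lemma choi_diag dS n (al : 'M[C]_dS -> 'M[C]_n) j a :
  choi (hs_adjoint al) (mxtens_index (j, a)) (mxtens_index (j, a))
  = (al (ket_bra R j j) a a)^*%C.
Proof. by rewrite /choi tens_idE blk_maxent /hs_adjoint mxE tr_mul_delta /adjmx !mxE. Qed.

Lemma tr_mul_tens m k (A B : 'M[C]_(m * k)) :
  \tr (A *m B) = \sum_(j < m) \sum_(a < k) \sum_(j' < m) \sum_(b < k)
     A (mxtens_index (j, a)) (mxtens_index (j', b)) *
     B (mxtens_index (j', b)) (mxtens_index (j, a)).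
Proof.
rewrite /mxtrace sum_tens; apply: eq_bigr => j _; apply: eq_bigr => a _.
by rewrite mxE sum_tens.
Qed.

Lemma pairing_E dA n dS (lam : 'I_n -> R) (rho : 'I_n -> 'M[C]_dA) (M : 'I_dS -> 'M[C]_dA)
  (al : 'M[C]_dS -> 'M[C]_n) :
  pairing (tens_id (qc_channel M) (cq_state lam rho)) al =
  \sum_j \sum_a ((lam a)%:C%C * \tr (rho a *m M j)) * (al (ket_bra R j j) a a)^*%C.
Proof.
rewrite /pairing tr_mul_tens; apply: eq_bigr => j _; apply: eq_bigr => a _.
rewrite (bigD1 j) //= [X in _ + X]big1 ?addr0; last first.
  by move=> j' /negPf nj; rewrite big1 // => b _; rewrite X_entry eq_sym nj !mul0r.
rewrite (bigD1 a) //= big1 ?addr0; last first.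
  by move=> b /negPf nb; rewrite X_entry [a == b]eq_sym nb !mul0r mulr0 mul0r.
by rewrite X_entry choi_diag !eqxx !mul1r.
Qed.


Lemma eq_tens m k (i j : 'I_m) (c c' : 'I_k) :
  (mxtens_index (i, c) == mxtens_index (j, c')) = (i == j) && (c == c').
Proof. by rewrite (inj_eq (can_inj (@mxtens_indexK m k))) xpair_eqE. Qed.

Lemma cp_entry dS n (al : 'M[C]_dS -> 'M[C]_n) j a :
  completely_positive al -> 0 <= al (ket_bra R j j) a a.
Proof.
move=> cp.
pose I0 : 'I_(dS * 1) := mxtens_index (j, ord0).
have hX : psd (delta_mx I0 I0 : 'M[C]_(dS * 1)).
  have -> : delta_mx I0 I0 = dmx (fun I => ((I == I0)%:R : C)).
    apply/matrixP => I J; rewrite !mxE.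
    by case: (I =P I0) => [->|_]; rewrite ?eqxx ?andTb ?andFb ?mulr1 ?mulr0 // eq_sym.
  by rewrite /dmx; apply: psd_diag => I; rewrite ler0n.
have := psd_entry (mxtens_index (a, ord0)) (cp 1%N _ hX).
rewrite tens_idE.
have -> // : blk (delta_mx I0 I0) ord0 ord0 = ket_bra R j j.
apply/matrixP => i i'; rewrite /blk /ket_bra !mxE !eq_tens !eqxx !andbT.
by [].
Qed.

Lemma tp_sum dS n (al : 'M[C]_dS -> 'M[C]_n) j :
  trace_preserving al -> \sum_a al (ket_bra R j j) a a = 1.
Proof. by move=> tp; move: (tp (ket_bra R j j)); rewrite /ket_bra tr_delta. Qed.


Definition chan dS n (g : 'I_dS -> 'I_n) (s : 'M[C]_dS) : 'M[C]_n :=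
  dmx (fun a => \sum_j (a == g j)%:R * s j j).

Lemma chan_lin dS n (g : 'I_dS -> 'I_n) : is_linear_map (chan g).
Proof.
move=> c u v; apply/matrixP => a b; rewrite !mxE.
rewrite (eq_bigr (fun j => c * ((a == g j)%:R * u j j) + (a == g j)%:R * v j j)); last first.
  by move=> j _; rewrite !mxE mulrDr mulrCA.
by rewrite big_split /= -mulr_sumr mulrDr mulrCA.
Qed.

Lemma chan_tp dS n (g : 'I_dS -> 'I_n) : trace_preserving (chan g).
Proof.
move=> s; rewrite /mxtrace.
rewrite (eq_bigr (fun a => \sum_j (a == g j)%:R * s j j)); last by move=> a _; rewrite mxE eqxx mul1r.
rewrite exchange_big /=; apply: eq_bigr => j _.
rewrite (bigD1 (g j)) //= eqxx mul1r big1 ?addr0 // => x /negPf ->.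
by rewrite mul0r.
Qed.

Lemma chan_delta dS n (g : 'I_dS -> 'I_n) j a :
  chan g (ket_bra R j j) a a = (((a == g j)%:R : R))%:C%C.
Proof.
rewrite /chan /dmx mxE eqxx mul1r (bigD1 j) //= big1 ?addr0.
  by rewrite /ket_bra mxE !eqxx mulr1; case: (a == g j).
by move=> j' /negPf nj; rewrite /ket_bra mxE nj mulr0.
Qed.


Lemma chan_cp dS n (g : 'I_dS -> 'I_n) : completely_positive (chan g).
Proof.
move=> k X hX v; rewrite qformE sum_tens; apply: sumr_ge0 => a _.
pose u (j : 'I_dS) : 'cV[C]_(dS * k) :=
  \col_I (((mxtens_unindex I).1 == j)%:R * v (mxtens_index (a, (mxtens_unindex I).2)) 0).
have hu j : (adjmx (u j) *m X *m u j) 0 0 = \sum_c \sum_c'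
    (v (mxtens_index (a, c)) 0)^*%C * X (mxtens_index (j, c)) (mxtens_index (j, c'))
      * v (mxtens_index (a, c')) 0.
  rewrite qformE sum_tens (bigD1 j) //= [X in _ + X]big1 ?addr0; last first.
    move=> j1 /negPf nj; apply: big1 => c _; apply: big1 => J _.
    by rewrite !mxE mxtens_indexK /= nj mul0r conjc0 !mul0r.
  apply: eq_bigr => c _; rewrite sum_tens (bigD1 j) //= [X in _ + X]big1 ?addr0; last first.
    by move=> j2 /negPf nj; apply: big1 => c' _; rewrite !mxE !mxtens_indexK /= nj mul0r mulr0.
  apply: eq_bigr => c' _.
  by rewrite !mxE !mxtens_indexK /= eqxx !mul1r.
have -> : \sum_c \sum_J (v (mxtens_index (a, c)) 0)^*%C * tens_id (chan g) X (mxtens_index (a, c)) J * v J 0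
   = \sum_j (a == g j)%:R * (adjmx (u j) *m X *m u j) 0 0.
  under [RHS]eq_bigr do rewrite hu mulr_sumr.
  rewrite [RHS]exchange_big /=; apply: eq_bigr => c _.
  under [RHS]eq_bigr do rewrite mulr_sumr.
  rewrite [RHS]exchange_big /= sum_tens (bigD1 a) //= [X in _ + X]big1 ?addr0; last first.
    move=> a' /negPf na; apply: big1 => c' _.
    by rewrite tens_idE /chan /dmx mxE eq_sym na mul0r mulr0 mul0r.
  apply: eq_bigr => c' _.
  rewrite tens_idE /chan /dmx mxE eqxx mul1r mulr_sumr mulr_suml.
  apply: eq_bigr => j _; rewrite /blk mxE.
  by rewrite mulrCA !mulrA.
apply: sumr_ge0 => j _; apply: mulr_ge0; first by rewrite ler0n.
exact: hX.
Qed.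


Lemma chan_is_channel dS n (g : 'I_dS -> 'I_n) : is_channel (chan g).
Proof. by split; [exact: chan_lin | exact: chan_cp | exact: chan_tp]. Qed.

Section Main.
Variables (dA n dS : nat) (lam : 'I_n -> R) (rho : 'I_n -> 'M[C]_dA) (M : 'I_dS -> 'M[C]_dA).
Let c x j := lam x * complex.Re (\tr (rho x *m M j)).

Lemma PQ_val (p : 'I_n -> 'I_dS -> R) :
  complex.Re (\sum_(x < n) \sum_(j < dS) ((lam x * p x j)%:C%C * \tr (rho x *m M j)))
  = \sum_x \sum_j p x j * c x j.
Proof.
rewrite Re_sum; apply: eq_bigr => x _; rewrite Re_sum; apply: eq_bigr => j _.
by rewrite ReMr /c mulrCA mulrA.
Qed.

Lemma diam_val (al : 'M[C]_dS -> 'M[C]_n) (w : 'I_n -> 'I_dS -> R) :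
  (forall a j, al (ket_bra R j j) a a = (w a j)%:C%C) ->
  complex.Re (pairing (tens_id (qc_channel M) (cq_state lam rho)) al)
  = \sum_a \sum_j w a j * c a j.
Proof.
move=> hw; rewrite pairing_E exchange_big Re_sum; apply: eq_bigr => a _.
rewrite Re_sum; apply: eq_bigr => j _.
by rewrite hw conjc_real ReMrr ReMr /c mulrC.
Qed.

Lemma Ps_val (N : 'I_n -> 'M[C]_dS) (w : 'I_n -> 'I_dS -> R) :
  (forall x j, N x j j = (w x j)%:C%C) ->
  complex.Re (\sum_(x < n) (lam x)%:C%C * \tr (qc_channel M (rho x) *m N x))
  = \sum_x \sum_j w x j * c x j.
Proof.
move=> hw; rewrite Re_sum; apply: eq_bigr => x _.
rewrite qc_diag tr_dmx_mul ReMr Re_sum mulr_sumr; apply: eq_bigr => j _.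
by rewrite hw ReMrr /c mulrA mulrC.
Qed.

End Main.

End H.

Theorem lemma4 (R : realType) (dA n dS : nat)
  (lam : 'I_n -> R) (rho : 'I_n -> 'M[R[i]]_dA) (M : 'I_dS -> 'M[R[i]]_dA) :
  is_ensemble lam rho -> is_measurement M ->
  PQ_succ lam rho M = diamond_norm (tens_id (qc_channel M) (cq_state lam rho))
  /\ diamond_norm (tens_id (qc_channel M) (cq_state lam rho))
     = P_succ lam (fun x => qc_channel M (rho x)).
Proof.
move=> [hl [hs hr]] [hMpsd hMsum].
case: (posnP n) => [n0|n0].
  by subst n; move: hs; rewrite big_ord0 => /eqP; rewrite eq_sym oner_eq0.
pose x0 : 'I_n := Ordinal n0.
pose c x j := lam x * complex.Re (\tr (rho x *m M j)).
have [g hg] := argmax_ex x0 c.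
pose W := \sum_j c (g j) j.
have hPQ : PQ_succ lam rho M = W.
  apply: sup_eq_max.
    exists (fun x j => (x == g j)%:R); last by rewrite PQ_val attain_lemma.
    by split => [x j|j]; [rewrite ler0n | exact: sum_indic].
  move=> y [p [hp0 hp1] <-]; rewrite PQ_val.
  exact: bound_lemma.
have hD : diamond_norm (tens_id (qc_channel M) (cq_state lam rho)) = W.
  apply: sup_eq_max.
    exists (chan g); first exact: chan_is_channel.
    by rewrite (@diam_val _ _ _ _ lam rho M _ (fun a j => (a == g j)%:R)) ?attain_lemma // => a j; rewrite chan_delta.
  move=> y [al [_ hcp htp] <-].
  pose w a j := complex.Re (al (ket_bra R j j) a a).
  have hw a j : al (ket_bra R j j) a a = (w a j)%:C%C /\ 0 <= w a j.
    exact: ge0_real (cp_entry j a hcp).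
  rewrite (@diam_val _ _ _ _ lam rho M _ (w)); last by move=> a j; case: (hw a j).
  apply: bound_lemma => // [a j|j]; first by case: (hw a j).
  by rewrite /w -Re_sum tp_sum.
have hP : P_succ lam (fun x => qc_channel M (rho x)) = W.
  apply: sup_eq_max.
    exists (fun x => dmx (fun i => ((x == g i)%:R : R[i]))).
      split => [x|]; first by rewrite /dmx; apply: psd_diag => i; rewrite ler0n.
      apply/matrixP => i k; rewrite summxE !mxE.
    under eq_bigr do rewrite /dmx mxE.
    by rewrite -mulr_sumr sum_indic mulr1.
    rewrite (@Ps_val _ _ _ _ lam rho M _ (fun x j => (x == g j)%:R)) ?attain_lemma // => x j.
    by rewrite mxE eqxx mul1r; case: (x == g j).
  move=> y [N [hNpsd hNsum] <-].
  pose w x j := complex.Re (N x j j).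
  have hw x j : N x j j = (w x j)%:C%C /\ 0 <= w x j.
    exact: ge0_real (psd_entry j (hNpsd x)).
  rewrite (@Ps_val _ _ _ _ lam rho M _ (w)); last by move=> x j; case: (hw x j).
  apply: bound_lemma => // [x j|j]; first by case: (hw x j).
  by rewrite /w -Re_sum -summxE hNsum mxE eqxx.
by rewrite hPQ hD hP.
Qed.
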